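(* The span of $K_n$ (the maximal number of everywhere linearly independent tangent vector fields) is $n$ if $n$ is odd and $n-1$ if $n$ is even. For all $n\ge1$, $K_n$ immerses in $\mathbb{R}^{n+1}$.
   Context: $K_n=(S^1)^n/\bigl((z_1,\ldots,z_{n-1},z_n)\sim(\overline{z}_1,\ldots,\overline{z}_{n-1},-z_n)\bigr)$, where $S^1\subset\mathbb{C}$ is the unit circle and $\overline{z}$ is complex conjugation. *)

(* Defs.v *)
From HB Require Import structures.
From mathcomp Require Import all_boot all_order all_algebra.
From mathcomp Require Import all_classical all_reals all_analysis.
Set Implicit Arguments. Unset Strict Implicit. Unset Printing Implicit Defensive.
Import Order.TTheory GRing.Theory Num.Theory.
Import numFieldNormedType.Exports.
Local Open Scope ring_scope.

(* Model of K_n = (S^1)^n / ((z_1,..,z_{n-1},z_n) ~ (conj z_1,..,conj z_{n-1},-z_n)).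
   Writing z_j = exp(i x_j), K_n is the quotient of R^n (row vectors 'rV_n)
   by the group generated by the translations x |-> x + 2 pi e_i and the
   map sigma(x) = (-x_1,..,-x_{n-1}, x_n + pi). *)

Section K.
Variables (R : realType) (n : nat).

Definition is_last (j : 'I_n) : bool := (val j == n.-1)%N.

Definition Ksigma (x : 'rV[R]_n) : 'rV[R]_n :=
  \row_j (if is_last j then x 0 j + pi else - x 0 j).

Definition Kdsigma (v : 'rV[R]_n) : 'rV[R]_n :=
  \row_j (if is_last j then v 0 j else - v 0 j).

Definition Ktrans (i : 'I_n) (x : 'rV[R]_n) : 'rV[R]_n :=
  x + \row_j (if j == i then 2 * pi else 0).

(* a (continuous) tangent vector field on K_n, in the global angular
   trivialisation of the tangent bundle of the torus: a continuous map
   R^n -> R^n invariant under the deck group *)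
Definition Kvector_field (v : 'rV[R]_n -> 'rV[R]_n) : Prop :=
  continuous v /\
  (forall i x, v (Ktrans i x) = v x) /\
  (forall x, v (Ksigma x) = Kdsigma (v x)).

Definition K_has_indep_fields (k : nat) : Prop :=
  exists V : 'I_k -> 'rV[R]_n -> 'rV[R]_n,
    (forall i, Kvector_field (V i)) /\
    (forall x, row_free (\matrix_(i < k, j < n) V i x 0 j)).

Definition K_span_is (s : nat) : Prop :=
  K_has_indep_fields s /\ (forall k, K_has_indep_fields k -> (k <= s)%N).

Fixpoint Ck (m : nat) (k : nat) (f : 'rV[R]_n -> 'rV[R]_m) : Prop :=
  match k with
  | 0%N => continuous f
  | k'.+1 => (forall x, differentiable f x) /\
             (forall i : 'I_n, Ck k' (fun x => derive f x (delta_mx 0 i)))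
  end.

Definition smooth (m : nat) (f : 'rV[R]_n -> 'rV[R]_m) : Prop :=
  forall k, Ck k f.

(* a smooth immersion K_n -> R^m, as a deck-invariant smooth map on the
   universal cover R^n whose differential is injective everywhere *)
Definition K_immerses_in (m : nat) : Prop :=
  exists f : 'rV[R]_n -> 'rV[R]_m,
    smooth f /\
    (forall i x, f (Ktrans i x) = f x) /\
    (forall x, f (Ksigma x) = f x) /\
    (forall x v, 'd f x v = 0 -> v = 0).

End K.

(* Main.v *)
Require Import Defs.
From HB Require Import structures.
From mathcomp Require Import all_boot all_order all_algebra.
From mathcomp Require Import all_classical all_reals all_analysis.
From mathcomp Require Import ring lra zify.
Set Implicit Arguments. Unset Strict Implicit. Unset Printing Implicit Defensive.
Import Order.TTheory GRing.Theory Num.Theory.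
Import numFieldNormedType.Exports.
Local Open Scope ring_scope.

Section Expr.
Variables (R : realType) (n : nat).

Inductive ex :=
 | Cst of R | SinC of nat | CosC of nat | Add of ex & ex | Mul of ex & ex.

Definition crd (i : nat) (x : 'rV[R]_n) : R :=
  if (i < n)%N =P true is ReflectT h then x 0 (Ordinal h) else 0.

Fixpoint eval (e : ex) (x : 'rV[R]_n) : R :=
  match e with
  | Cst r => r
  | SinC i => sin (crd i x)
  | CosC i => cos (crd i x)
  | Add a b => eval a x + eval b x
  | Mul a b => eval a x * eval b x
  end.

Fixpoint dn (j : nat) (e : ex) : ex :=
  match e with
  | Cst _ => Cst 0
  | SinC i => if i == j then CosC i else Cst 0
  | CosC i => if i == j then Mul (Cst (-1)) (SinC i) else Cst 0
  | Add a b => Add (dn j a) (dn j b)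
  | Mul a b => Add (Mul a (dn j b)) (Mul (dn j a) b)
  end.

Lemma crd_diff i x : differentiable (crd i) x /\
  forall v, 'd (crd i) x v = \sum_(j < n) v 0 j * (if (val j == i) then 1 else 0).
Proof.
rewrite /crd; case: eqP => h.
  split; first exact: differentiable_coord.
  have @f : {linear 'rV[R]_n -> R}.
    by exists (fun N : 'rV[R]_n => N 0 (Ordinal h)); do 2![eexists]; do ?[constructor];
     rewrite ?mxE// => ? *; rewrite ?mxE//; move=> ?; rewrite !mxE.
  have -> : (fun N : 'rV[R]_n => N 0 (Ordinal h)) = f by [].
  move=> v; rewrite diff_lin; last exact: coord_continuous.
  rewrite (bigD1 (Ordinal h)) //= eqxx mulr1 big1 ?addr0 // => j /negP hj.
  case: eqP => [hji|]; last by rewrite mulr0.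
  by exfalso; apply: hj; apply/eqP/val_inj.
have -> : (fun _ : 'rV[R]_n => 0) = cst (0:R) by [].
split; first exact: differentiable_cst.
move=> v; rewrite diff_cst big1 // => j _.
case: eqP => [hji|]; last by rewrite mulr0.
by exfalso; apply: h; rewrite -hji ltn_ord.
Qed.

End Expr.


Section Expr2.
Variables (R : realType) (n : nat).

Lemma dsin (y h : R) : 'd (@sin R) y h = h * cos y.
Proof.
rewrite diff1E; last exact/derivable1_diffP/derivable_sin.
by rewrite derive1E derive_val.
Qed.

Lemma dcos (y h : R) : 'd (@cos R) y h = h * - sin y.
Proof.
rewrite diff1E; last exact/derivable1_diffP/derivable_cos.
by rewrite derive1E derive_val.
Qed.

Lemma eval_diff (e : ex R) (x : 'rV[R]_n) : differentiable (eval e) x /\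
  forall v, 'd (eval e) x v = \sum_(j < n) v 0 j * eval (dn j e) x.
Proof.
elim: e => [r|i|i|a [da Ha] b [db Hb]|a [da Ha] b [db Hb]] /=.
- have -> : (fun _ : 'rV[R]_n => r) = cst r by [].
  split; first exact: differentiable_cst.
  by move=> v; rewrite diff_cst big1 // => j _; rewrite mulr0.
- have -> : (fun x : 'rV[R]_n => sin (crd i x)) = sin \o crd i by [].
  have [dc Hc] := crd_diff i x.
  have ds : differentiable (@sin R) (crd i x) by exact/derivable1_diffP/derivable_sin.
  split; first exact: differentiable_comp.
  move=> v; rewrite diff_comp //= dsin Hc big_distrl /=.
  apply: eq_bigr => j _; rewrite eq_sym; case: eqP => _ /=; first by rewrite mulr1.
  by rewrite mulr0 mul0r.
- have -> : (fun x : 'rV[R]_n => cos (crd i x)) = cos \o crd i by [].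
  have [dc Hc] := crd_diff i x.
  have ds : differentiable (@cos R) (crd i x) by exact/derivable1_diffP/derivable_cos.
  split; first exact: differentiable_comp.
  move=> v; rewrite diff_comp //= dcos Hc big_distrl /=.
  apply: eq_bigr => j _; rewrite eq_sym; case: eqP => _ /=.
    by rewrite mulr1 mulN1r.
  by rewrite mulr0 mul0r.
- have -> : (fun x => eval a x + eval b x) = eval a + eval b by [].
  split; first exact: differentiableD.
  move=> v; rewrite diffD //= Ha Hb -big_split /=.
  by apply: eq_bigr => j _; rewrite mulrDr.
- have -> : (fun x => eval a x * eval b x) = eval a * eval b by [].
  split; first exact: differentiableM.
  move=> v; rewrite diffM //.
  have -> : (eval a x \*: 'd (eval b) x + eval b x \*: 'd (eval a) x) v =
     eval a x * 'd (eval b) x v + eval b x * 'd (eval a) x v by [].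
  rewrite Ha Hb !big_distrr -big_split /=.
  by apply: eq_bigr => j _; ring.
Qed.

End Expr2.


Section Vmap.
Variables (R : realType) (n : nat).

Definition vmap m (E : nat -> ex R) (x : 'rV[R]_n) : 'rV[R]_m :=
  \row_(k < m) eval (E k) x.

Lemma vmap_diff m E x : differentiable (vmap m E) x.
Proof.
have -> : vmap m E = \sum_(k < m) (fun y => eval (E k) y *: (delta_mx 0 k : 'rV[R]_m)).
  rewrite fct_sumE; apply/funext => y; rewrite [LHS]row_sum_delta.
  by apply: eq_bigr => k _; rewrite mxE.
apply: differentiable_sum => k; apply: differentiableZl.
by have [] := eval_diff (E k) x.
Qed.

Lemma vmap_d m E x v : 'd (vmap m E) x v =
  \row_(k < m) \sum_(j < n) v 0 j * eval (dn j (E k)) x.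
Proof.
rewrite -deriveE; last exact: vmap_diff.
rewrite derive_mx; last exact/diff_derivable/vmap_diff.
apply/rowP => k; rewrite !mxE.
have -> : (fun t => vmap m E t 0 k) = eval (E k).
  by apply/funext => t; rewrite mxE.
have [d H] := eval_diff (E k) x.
by rewrite deriveE // H.
Qed.

Lemma vmap_derive m E x i :
  derive (vmap m E) x (delta_mx 0 i) = vmap m (fun k => dn i (E k)) x.
Proof.
rewrite deriveE; last exact: vmap_diff.
rewrite vmap_d; apply/rowP => k; rewrite !mxE.
rewrite (bigD1 i) //= big1 ?addr0.
  by rewrite mxE !eqxx mul1r.
by move=> j /negPf hj; rewrite mxE hj andbF mul0r.
Qed.

Lemma vmap_Ck m k E : Ck k (vmap m E).
Proof.
elim: k E => [|k IH] E /=.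
  by move=> x; apply: differentiable_continuous; exact: vmap_diff.
split; first exact: vmap_diff.
move=> i.
have -> : (fun x => derive (vmap m E) x (delta_mx 0 i)) = vmap m (fun k => dn i (E k)).
  by apply/funext => x; rewrite vmap_derive.
exact: IH.
Qed.

Lemma vmap_smooth m E : smooth (vmap m E).
Proof. by move=> k; exact: vmap_Ck. Qed.

End Vmap.


Section Dsum.
Variables (R : realType) (n : nat).
Implicit Types (x v : 'rV[R]_n) (e : ex R).

Definition Dsum v e x := \sum_(j < n) v 0 j * eval (dn j e) x.

Lemma Dsum_cst v r x : Dsum v (Cst r) x = 0.
Proof. by rewrite /Dsum big1 // => j _; rewrite /= mulr0. Qed.

Lemma Dsum_add v a b x : Dsum v (Add a b) x = Dsum v a x + Dsum v b x.
Proof. by rewrite /Dsum -big_split; apply: eq_bigr => j _ /=; rewrite mulrDr. Qed.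

Lemma Dsum_mul v a b x : Dsum v (Mul a b) x = eval a x * Dsum v b x + eval b x * Dsum v a x.
Proof.
rewrite /Dsum !big_distrr -big_split; apply: eq_bigr => j _ /=; ring.
Qed.

Lemma sum_atom v i (r : R) :
  \sum_(j < n) v 0 j * (if i == val j then r else 0) = crd i v * r.
Proof.
rewrite /crd; case: eqP => h.
  rewrite (bigD1 (Ordinal h)) //= eqxx big1 ?addr0 // => j /negP hj.
  case: eqP => [hji|]; last by rewrite mulr0.
  by exfalso; apply: hj; apply/eqP/val_inj.
rewrite mul0r big1 // => j _; case: eqP => [hji|]; last by rewrite mulr0.
by exfalso; apply: h; rewrite hji ltn_ord.
Qed.

Lemma Dsum_sin v i x : Dsum v (SinC R i) x = crd i v * cos (crd i x).
Proof.
rewrite /Dsum -sum_atom; apply: eq_bigr => j _ /=.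
by case: eqP.
Qed.

Lemma Dsum_cos v i x : Dsum v (CosC R i) x = crd i v * - sin (crd i x).
Proof.
rewrite /Dsum -sum_atom; apply: eq_bigr => j _ /=.
by case: eqP => //= _; rewrite mulN1r.
Qed.

Definition DsumE := (Dsum_cst, Dsum_add, Dsum_mul, Dsum_sin, Dsum_cos).

Lemma vmap_dE m E x v : 'd (vmap m E) x v = \row_(k < m) Dsum v (E k) x.
Proof. by rewrite vmap_d. Qed.

Lemma crd_trans i j x : crd j (Ktrans i x) = crd j x + (if j == val i then pi *+ 2 else 0).
Proof.
rewrite /crd /Ktrans; case: eqP => h; last first.
  rewrite (_ : (j == val i) = false) ?addr0 //.
  by apply/eqP => hj; apply: h; rewrite hj ltn_ord.
rewrite !mxE; congr (_ + _).
have -> : (Ordinal h == i) = (j == val i) by rewrite -(inj_eq val_inj).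
by case: ifP => _ //; rewrite mulr2n mulrDl mul1r.
Qed.

Lemma eval_trans i e x : eval e (Ktrans i x) = eval e x.
Proof.
elim: e => [r|j|j|a Ha b Hb|a Ha b Hb] //=; rewrite ?Ha ?Hb //;
  rewrite crd_trans; case: eqP => _; rewrite ?addr0 //.
  exact: sinD2pi.
exact: cosD2pi.
Qed.

Lemma crd_sigma j x : crd j (Ksigma x) =
   if (j < n)%N then (if j == n.-1 then crd j x + pi else - crd j x) else 0.
Proof.
rewrite /crd /Ksigma; case: eqP => h; last by case: ltnP h.
by rewrite h !mxE /is_last /=.
Qed.

Lemma sin_sigma j x : sin (crd j (Ksigma x)) = - sin (crd j x).
Proof.
rewrite crd_sigma; case: ltnP => h.
  by case: eqP => _; [rewrite sinDpi | rewrite sinN].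
have -> : crd j x = 0 by rewrite /crd; case: eqP => // h'; move: h; rewrite leqNgt h'.
by rewrite sin0 oppr0.
Qed.

Lemma cos_sigma j x : (0 < n)%N -> cos (crd j (Ksigma x)) =
  if j == n.-1 then - cos (crd j x) else cos (crd j x).
Proof.
move=> hn; rewrite crd_sigma; case: ltnP => h.
  by case: eqP => _; [rewrite cosDpi | rewrite cosN].
have -> : crd j x = 0 by rewrite /crd; case: eqP => // h'; move: h; rewrite leqNgt h'.
case: eqP => hj //.
by move: h; rewrite hj leqNgt ltn_predL hn.
Qed.

End Dsum.


Section G.
Variables (R : realType).

Fixpoint Bnd (fig : bool) (p : nat) : R :=
  if p is p'.+1 then (if fig then 12 * Bnd fig p' + 1 else Bnd fig p' + 1) + Bnd fig p'
  else 0.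
Definition cc fig p : R := if fig then 12 * Bnd fig p + 1 else Bnd fig p + 1.

Definition D1 fig p : ex R := if fig then SinC R p else CosC R p.
Definition D2 fig p : ex R := if fig then Mul (SinC R p) (CosC R p) else SinC R p.
Definition N1 fig p : ex R := if fig then
  Add (Mul (SinC R p) (SinC R p)) (Mul (Cst (-1)) (Mul (CosC R p) (CosC R p)))
  else CosC R p.
Definition N2 fig p : ex R := if fig then CosC R p else SinC R p.

Fixpoint G (fig : bool) (p k : nat) : ex R :=
  match p with
  | 0 => Cst 0
  | p'.+1 => match k with
    | 0 => Add (Mul (Cst (cc fig p')) (D1 fig p')) (Mul (G fig p' 0) (N1 fig p'))
    | 1 => Add (Mul (Cst (cc fig p')) (D2 fig p')) (Mul (G fig p' 0) (N2 fig p'))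
    | k'.+2 => G fig p' k'.+1
    end
  end.

Lemma Bnd_ge0 fig p : 0 <= Bnd fig p.
Proof. elim: p => [|p IH] //=; case: fig IH => /= IH; lra. Qed.

Lemma aux_bound (c d m g B : R) : 0 <= c -> -1 <= d <= 1 -> -1 <= m <= 1 ->
  - B <= g <= B -> - (c + B) <= c * d + g * m <= c + B.
Proof.
move=> h0 /andP[d1 d2] /andP[m1 m2] /andP[g1 g2]; apply/andP; split; nra.
Qed.

Lemma G_bound fig p k n (x : 'rV[R]_n) :
  - Bnd fig p <= eval (G fig p k) x <= Bnd fig p.
Proof.
elim: p k => [|p IH] k /=; first by rewrite oppr0 lexx.
have hB := Bnd_ge0 fig p.
have [l0 u0] := andP (IH 0%N).
set s := sin (crd p x); set c := cos (crd p x).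
have hs1 : -1 <= s <= 1 by rewrite sin_geN1 sin_le1.
have hc1 : -1 <= c <= 1 by rewrite cos_geN1 cos_le1.
have hsc : s ^+ 2 + c ^+ 2 = 1 by rewrite addrC cos2Dsin2.
have hsc2 : -1 <= s * c <= 1.
  have h1 : 0 <= (s - c) ^+ 2 by rewrite sqr_ge0.
  have h2 : 0 <= (s + c) ^+ 2 by rewrite sqr_ge0.
  apply/andP; split; nra.
have hN : -1 <= s * s + (-1) * (c * c) <= 1.
  have h1 : 0 <= s ^+ 2 by rewrite sqr_ge0.
  have h2 : 0 <= c ^+ 2 by rewrite sqr_ge0.
  apply/andP; split; nra.
case: k => [|[|k]].
- clear IH; rewrite /cc /D1 /N1; case: fig hB l0 u0 => /= hB l0 u0;
    apply: aux_bound => //; lra.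
- clear IH; rewrite /cc /D2 /N2; case: fig hB l0 u0 => /= hB l0 u0;
    apply: aux_bound => //; lra.
- have [l u] := andP (IH k.+1); clear IH; apply/andP; split; rewrite /cc; case: fig l u hB l0 u0 => /= *; lra.
Qed.

Lemma alg_fig (B a vp al s c : R) : s ^+ 2 + c ^+ 2 = 1 -> -1 <= s <= 1 ->
  - B <= a <= B -> 0 <= B ->
  (12 * B + 1) * (vp * c) + s * 0 +
    (a * (s * (vp * c) + s * (vp * c) + (-1 * (c * (vp * - s) + c * (vp * - s)) + c * c * 0))
     + (s * s + -1 * (c * c)) * al) = 0 ->
  (12 * B + 1) * (s * (vp * - s) + c * (vp * c)) + s * c * 0 + (a * (vp * - s) + c * al) = 0 ->
  vp = 0 /\ al = 0.
Proof.
move=> hsc /andP[s1 s2] /andP[a1 a2] hB E0 E1.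
set K := 12 * B + 1.
have e0 : K * vp * c + a * vp * (4 * s * c) + (s * s - c * c) * al = 0 by rewrite -E0 /K; ring.
have e1 : K * vp * (c * c - s * s) - a * vp * s + c * al = 0 by rewrite -E1 /K; ring.
set Q := c * c + (c * c - s * s) ^+ 2.
set M := s * (3 * c * c + s * s).
have ss : s * s = 1 - c * c by move: hsc; rewrite !expr2; lra.
have hQ : 7/16 <= Q.
  have : Q - 7/16 = (2 * c * c - 3/4) ^+ 2 by rewrite /Q ss; field.
  by move=> h; rewrite -subr_ge0 h sqr_ge0.
have hc2 : 0 <= c * c <= 1.
  have h1 : 0 <= s * s by rewrite -expr2 sqr_ge0.
  have h2 : 0 <= c * c by rewrite -expr2 sqr_ge0.
  lra.
have hM : -3 <= M <= 3.
  have h3 : 1 <= 3 * c * c + s * s <= 3 by rewrite ss; lra.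
  move: h3 => /andP [h3 h4]; rewrite /M; apply/andP; split; nra.
have key : vp * (K * Q + a * M) = 0.
  have -> : vp * (K * Q + a * M) = c * (K * vp * c + a * vp * (4 * s * c) + (s * s - c * c) * al)
     + (c * c - s * s) * (K * vp * (c * c - s * s) - a * vp * s + c * al).
    by rewrite /Q /M; ring.
  by rewrite e0 e1; ring.
have pos : 0 < K * Q + a * M.
  move: hM => /andP[m1 m2].
  have p1 : 0 <= (B + a) * (3 + M) by apply: mulr_ge0; lra.
  have p2 : 0 <= (B - a) * (3 - M) by apply: mulr_ge0; lra.
  have p3 : 0 <= K * (Q - 7/16) by apply: mulr_ge0; rewrite /K; lra.
  rewrite /K in p3 *; lra.
have vp0 : vp = 0.
  by move/eqP: key; rewrite mulf_eq0 => /orP[/eqP //|]; rewrite gt_eqF.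
split => //.
move: e0 e1; rewrite vp0 ?(mulr0, mul0r, add0r, addr0, subr0, mulrN, oppr0) => e0 e1.
have : al * al * Q = 0.
  have -> : al * al * Q = al * (c * (c * al) + (s * s - c * c) * ((s * s - c * c) * al)).
    by rewrite /Q; ring.
  by rewrite e0 e1; ring.
move/eqP; rewrite mulf_eq0 => /orP[|/eqP hQ0]; last by move: hQ; rewrite hQ0; lra.
by rewrite mulf_eq0 orbb => /eqP.
Qed.

Lemma alg_circ (B a vp al s c : R) : s ^+ 2 + c ^+ 2 = 1 ->
  - B <= a <= B -> 0 <= B ->
  (B + 1) * (vp * - s) + c * 0 + (a * (vp * - s) + c * al) = 0 ->
  (B + 1) * (vp * c) + s * 0 + (a * (vp * c) + s * al) = 0 ->
  vp = 0 /\ al = 0.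
Proof.
move=> hsc /andP[a1 a2] hB E0 E1.
have key : vp * (B + 1 + a) = 0.
  have -> : vp * (B + 1 + a) = vp * (B + 1 + a) * (s ^+ 2 + c ^+ 2) by rewrite hsc mulr1.
  have -> : vp * (B + 1 + a) * (s ^+ 2 + c ^+ 2) =
    - s * ((B + 1) * (vp * - s) + c * 0 + (a * (vp * - s) + c * al))
    + c * ((B + 1) * (vp * c) + s * 0 + (a * (vp * c) + s * al)) by ring.
  by rewrite E0 E1; ring.
have vp0 : vp = 0.
  by move/eqP: key; rewrite mulf_eq0 => /orP[/eqP //|/eqP h]; lra.
split => //.
move: E0 E1; rewrite vp0 ?(mulr0, mul0r, add0r, addr0, subr0, mulrN, oppr0) => e0 e1.
have : al * al = 0.
  have -> : al * al = al * al * (s ^+ 2 + c ^+ 2) by rewrite hsc mulr1.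
  have -> : al * al * (s ^+ 2 + c ^+ 2) = al * (s * (s * al) + c * (c * al)) by ring.
  by rewrite e0 e1; ring.
by move/eqP; rewrite mulf_eq0 orbb => /eqP.
Qed.

Lemma G_imm fig p n (x v : 'rV[R]_n) :
  (forall k, (k <= p)%N -> Dsum v (G fig p k) x = 0) ->
  forall j, (j < p)%N -> crd j v = 0.
Proof.
elim: p => [|p IH] H j hj; first by [].
have E0 := H 0%N isT; have E1 := H 1%N isT.
rewrite /= /D1 /D2 /N1 /N2 /cc in E0 E1.
have [l0 u0] := andP (G_bound fig p 0 x).
have hsc : sin (crd p x) ^+ 2 + cos (crd p x) ^+ 2 = 1 by rewrite addrC cos2Dsin2.
have [vp0 al0] : crd p v = 0 /\ Dsum v (G fig p 0) x = 0.
  case: fig IH H E0 E1 l0 u0 => IH H E0 E1 l0 u0; rewrite !DsumE /= in E0 E1.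
    apply: (alg_fig hsc _ _ (Bnd_ge0 _ _) E0 E1); first by rewrite sin_geN1 sin_le1.
    by rewrite l0 u0.
  apply: (alg_circ hsc _ (Bnd_ge0 _ _) E0 E1).
  by rewrite l0 u0.
have IH' := IH _.
rewrite ltnS leq_eqVlt in hj; case/orP: hj => [/eqP -> //|hj].
apply: IH => // -[|k] hk //.
by apply: (H k.+2).
Qed.
End G.


Section Par.
Variables (R : realType) (n : nat).

Definition eps (fig : bool) (k : nat) : R := if fig || (k != 0)%N then -1 else 1.

Lemma G_sigma fig p k (x : 'rV[R]_n) : (0 < n)%N -> (p <= n.-1)%N ->
  eval (G R fig p k) (Ksigma x) = eps fig k * eval (G R fig p k) x.
Proof.
move=> hn; elim: p k => [|p IH] k hp /=; first by rewrite mulr0.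
have hp' : (p <= n.-1)%N by apply: ltnW.
have hpn : (p == n.-1) = false by apply/negbTE; rewrite neq_ltn hp.
have cs : cos (crd p (Ksigma x)) = cos (crd p x) by rewrite cos_sigma // hpn.
have ss : sin (crd p (Ksigma x)) = - sin (crd p x) by rewrite sin_sigma.
case: k => [|[|k]].
- rewrite /D1 /N1 /= IH //; case: fig IH => IH /=; rewrite ?cs ?ss /eps /=; ring.
- rewrite /D2 /N2 /= IH //; case: fig IH => IH /=; rewrite ?cs ?ss /eps /=; ring.
- by rewrite IH.
Qed.

End Par.

Section Imm.
Variables (R : realType) (n : nat).

Definition figK := ~~ odd n.
Definition oK : nat := odd n.
Definition gK k := G R figK n.-1 k.
Definition St := SinC R n.-1.
Definition Ct := CosC R n.-1.
Definition uK k : ex R :=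
  if (k < oK)%N then gK k
  else if ~~ odd (k - oK) then Add (Mul Ct (gK k)) (Mul (Cst (-1)) (Mul St (gK k.+1)))
  else Add (Mul St (gK k.-1)) (Mul Ct (gK k)).
Definition cK : R := 2 * Bnd R figK n.-1 + 1.
Definition FK k : ex R :=
  match k with
  | 0 => Mul (Add (Cst cK) (uK 0)) (Add (Mul Ct Ct) (Mul (Cst (-1)) (Mul St St)))
  | 1 => Mul (Add (Cst cK) (uK 0)) (Mul (Cst 2) (Mul St Ct))
  | k'.+2 => uK k'.+1
  end.
Definition fK : 'rV[R]_n -> 'rV[R]_n.+1 := vmap n.+1 FK.

Lemma fK_trans i x : fK (Ktrans i x) = fK x.
Proof. by apply/rowP => k; rewrite !mxE eval_trans. Qed.

Lemma eps_oK j : (oK <= j)%N -> eps R figK j = -1.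
Proof.
rewrite /eps /figK /oK; case: (odd n) => //= h.
by case: j h.
Qed.

Lemma uK_sigma k (x : 'rV[R]_n) : (0 < n)%N -> eval (uK k) (Ksigma x) = eval (uK k) x.
Proof.
move=> hn.
have cs : cos (crd n.-1 (Ksigma x)) = - cos (crd n.-1 x) by rewrite cos_sigma // eqxx.
have ss : sin (crd n.-1 (Ksigma x)) = - sin (crd n.-1 x) by rewrite sin_sigma.
rewrite /uK /gK; case: ifP => h1.
  rewrite G_sigma //.
  move: h1; rewrite /oK /eps /figK; case: (odd n) => //=; case: k => //=.
  by rewrite mul1r.
have hk : (oK <= k)%N by rewrite leqNgt h1.
case: ifP => h2 /=; rewrite !G_sigma // cs ss !eps_oK //.
- ring.
- exact: leqW.
- ring.
- move: h2 => /negbFE h2.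
  have h3 : (oK < k)%N by rewrite -subn_gt0; case: (k - oK)%N h2.
  by rewrite -ltnS prednK // (leq_ltn_trans _ h3).
Qed.

End Imm.


Section Imm2.
Variables (R : realType) (n : nat).

Lemma fK_sigma (x : 'rV[R]_n) : (0 < n)%N -> fK (Ksigma x) = fK x.
Proof.
move=> hn.
have cs : cos (crd n.-1 (Ksigma x)) = - cos (crd n.-1 x) by rewrite cos_sigma // eqxx.
have ss : sin (crd n.-1 (Ksigma x)) = - sin (crd n.-1 x) by rewrite sin_sigma.
apply/rowP => k; rewrite !mxE.
case: k => [[|[|k]] hk] /=; rewrite ?uK_sigma // cs ss; ring.
Qed.

Lemma pair_inv (C S a b : R) : C ^+ 2 + S ^+ 2 = 1 ->
  C * a + -1 * (S * b) = 0 -> S * a + C * b = 0 -> a = 0 /\ b = 0.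
Proof.
move=> h e1 e2.
have ha : a * (C ^+ 2 + S ^+ 2) = C * (C * a + -1 * (S * b)) + S * (S * a + C * b).
  by ring.
have hb : b * (C ^+ 2 + S ^+ 2) = - S * (C * a + -1 * (S * b)) + C * (S * a + C * b).
  by ring.
rewrite h mulr1 in ha; rewrite h mulr1 in hb.
by split; [rewrite ha e1 e2 | rewrite hb e1 e2]; rewrite !mulr0 addr0.
Qed.

Lemma fK_imm (x v : 'rV[R]_n) : (0 < n)%N -> 'd (@fK R n) x v = 0 -> v = 0.
Proof.
move=> hn; rewrite /fK vmap_dE => /rowP H.
have Hk : forall k, (k < n.+1)%N -> Dsum v (FK R n k) x = 0.
  by move=> k hk; have := H (Ordinal hk); rewrite !mxE.
set S := sin (crd n.-1 x); set C := cos (crd n.-1 x).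
set vt := crd n.-1 v.
have hsc : C ^+ 2 + S ^+ 2 = 1 by rewrite cos2Dsin2.
have hs1 : -1 <= S <= 1 by rewrite sin_geN1 sin_le1.
have hc1 : -1 <= C <= 1 by rewrite cos_geN1 cos_le1.
have [l0 u0] := andP (G_bound (figK n) n.-1 0 x).
have [l1 u1] := andP (G_bound (figK n) n.-1 1 x).
have [p1 p2] := andP (aux_bound (lexx 0) hc1 hs1 (G_bound (figK n) n.-1 1 x)).
have [p3 p4] := andP (aux_bound (lexx 0) hs1 hc1 (G_bound (figK n) n.-1 0 x)).
have hB : 0 <= Bnd R (figK n) n.-1 by apply: Bnd_ge0.
set U := cK R n + eval (uK R n 0) x.
have hU : 0 < U.
  rewrite /U /cK /uK /gK; case: ifP => h0 /=; first lra.
  rewrite /oK in h0 *; case: (odd n) h0 => //= _.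
  rewrite -/S -/C.
  nra.
set be := Dsum v (uK R n 0) x.
have E0 := Hk 0%N isT; have E1 := Hk 1%N (hn : (1 < n.+1)%N).
rewrite /= !DsumE /= -/S -/C -/vt -/U -/be in E0 E1.
have [vt0 be0] : vt = 0 /\ be = 0.
  have key : 2 * U * vt * (C ^+ 2 + S ^+ 2) ^+ 2 =
    - (2 * (S * C)) * (U *
    (C * (vt * - S) + C * (vt * - S) +
     (-1 * (S * (vt * C) + S * (vt * C)) + S * S * 0)) +
    (C * C + -1 * (S * S)) * (0 + be)) +
    (C * C + -1 * (S * S)) * (U * (2 * (S * (vt * - S) + C * (vt * C)) + S * C * 0) +
    2 * (S * C) * (0 + be)) by ring.
  rewrite E0 E1 hsc expr1n mulr1 mulr0 mulr0 addr0 in key.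
  have vt0 : vt = 0.
    move/eqP: key; rewrite !mulf_eq0 => /orP[/orP[|/eqP hU0]|/eqP //].
      by rewrite pnatr_eq0.
    by move: hU; rewrite hU0 ltxx.
  split => //.
  move: E0 E1; rewrite vt0 ?(mulr0, mul0r, add0r, addr0, mulrN, oppr0) => e0 e1.
  have : be * (C ^+ 2 + S ^+ 2) ^+ 2 =
     (C * C + -1 * (S * S)) * ((C * C + -1 * (S * S)) * be) + (2 * (S * C)) * (2 * (S * C) * be) by ring.
  by rewrite e0 e1 hsc expr1n mulr1 !mulr0 addr0.
have hb : forall k, (k <= n.-1)%N -> Dsum v (uK R n k) x = 0.
  case => [|k] hk; first exact: be0.
  apply: (Hk k.+2); rewrite ltnS; move: hk; case: (n) => //.
have ha : forall k, (k <= n.-1)%N -> Dsum v (gK R n k) x = 0.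
  move=> k hk.
  have hb1 := hb k hk.
  rewrite /uK in hb1; case: ifP hb1 => h1 hb1; first exact: hb1.
  have hok : (oK n <= k)%N by rewrite leqNgt h1.
  case: ifP hb1 => h2 hb1.
  - have hkn : (k < n.-1)%N.
      rewrite ltn_neqAle hk andbT; apply/eqP => ek; move: h2; rewrite ek.
      rewrite oddB; last by rewrite -ek.
      rewrite /oK oddb; case: (n) hn => //= m _.
      by case: (odd m).
    have hb2 := hb k.+1 hkn.
    rewrite /uK ltnNge (leqW hok) /= subSn // /= h2 /= in hb2.
    rewrite !DsumE /= -/S -/C -/vt vt0 ?(mulr0, mul0r, add0r, addr0, mulrN, oppr0) in hb1 hb2.
    by case: (pair_inv hsc hb1 hb2).
  - have h3 : (oK n < k)%N.
      by move: h2 => /negbFE h2; rewrite -subn_gt0; case: (k - oK n)%N h2.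
    have hk0 : (0 < k)%N by apply: leq_ltn_trans h3.
    have hk1 : (oK n <= k.-1)%N by rewrite -ltnS prednK.
    have hb0 := hb k.-1 (leq_trans (leq_pred k) hk).
    rewrite /uK ltnNge hk1 /= in hb0.
    have ho : ~~ odd (k.-1 - oK n).
      move: h2 => /negbFE; rewrite -(prednK hk0) subSn //= prednK //.
    rewrite ho /= prednK // in hb0.
    rewrite !DsumE /= -/S -/C -/vt vt0 ?(mulr0, mul0r, add0r, addr0, mulrN, oppr0) in hb0 hb1.
    by case: (pair_inv hsc hb0 hb1).
have hj := G_imm ha.
apply/rowP => j; rewrite mxE.
have -> : v 0 j = crd j v.
  rewrite /crd; case: eqP => h; last by case: h; exact: ltn_ord.
  by congr (v 0 _); apply: val_inj.
have : (val j < n.-1.+1)%N by rewrite (prednK hn) ltn_ord.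
rewrite ltnS leq_eqVlt => /orP[/eqP ->|/hj //].
exact: vt0.
Qed.
End Imm2.


Section Fields.
Variables (R : realType) (n : nat).

Definition sK : nat := if odd n then n else n.-1.

Definition Ef (i k : nat) : ex R :=
  if i == sK.-1 then (if k == n.-1 then Cst 1 else Cst 0)
  else if (i < sK.-1)%N && (i./2 == k./2) then
    match odd i, odd k with
    | false, false => CosC R n.-1
    | false, true => SinC R n.-1
    | true, false => Mul (Cst (-1)) (SinC R n.-1)
    | true, true => CosC R n.-1
    end
  else Cst 0.

Lemma sK_even : ~~ odd sK.-1.
Proof.
rewrite /sK; case: n => [|m] //=; case h: (odd m) => /=.
  by case: m h => //= m'.
by rewrite h.
Qed.

Lemma sK_le : (sK.-1 <= n.-1)%N.
Proof. rewrite /sK; case: (odd n) => //; exact: leq_pred. Qed.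

Lemma sK_gt0 : (0 < n)%N -> (0 < sK)%N.
Proof.
rewrite /sK; case: n => [|m] //= _; case h: (odd m) => //=.
by case: m h.
Qed.

Lemma pair_lt i k : (i < sK.-1)%N -> i./2 == k./2 -> (k < sK.-1)%N.
Proof.
move=> hi /eqP hik.
have e := sK_even.
have hs : sK.-1 = (sK.-1)./2.*2 by rewrite -[LHS]odd_double_half (negbTE e).
have hq : (k./2 < (sK.-1)./2)%N by rewrite -hik ltn_half_double -hs.
have hk : k = (odd k + k./2.*2)%N by rewrite odd_double_half.
rewrite hk hs; move: hq.
have ho : (odd k <= 1)%N by case: odd.
move: (nat_of_bool (odd k)) ho => o ho.
rewrite -!addnn.
move: (k./2) ((sK.-1)./2) => a b; lia.
Qed.

Lemma sum1 m (w : 'rV[R]_m) (F : nat -> R) a :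
  (forall i : 'I_m, val i != a -> F i = 0) ->
  \sum_(i < m) w 0 i * F i = crd a w * F a.
Proof.
move=> h; rewrite -sum_atom; apply: eq_bigr => i _.
by case: eqP => [-> //|/eqP hi]; rewrite h // eq_sym.
Qed.

Lemma sum2 m (w : 'rV[R]_m) (F : nat -> R) a b : a != b ->
  (forall i : 'I_m, val i != a -> val i != b -> F i = 0) ->
  \sum_(i < m) w 0 i * F i = crd a w * F a + crd b w * F b.
Proof.
move=> hab h; rewrite -!sum_atom -big_split; apply: eq_bigr => i _ /=.
rewrite -mulrDr; congr (_ * _).
have [ea|na] := eqVneq a (val i); have [eb|nb] := eqVneq b (val i).
- by move: hab; rewrite ea eb eqxx.
- by rewrite ea addr0.
- by rewrite eb add0r.
- by rewrite addr0 h // eq_sym.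
Qed.

Lemma crd_ord m (w : 'rV[R]_m) (j : 'I_m) : w 0 j = crd j w.
Proof.
rewrite /crd; case: eqP => h; last by case: h; exact: ltn_ord.
by congr (w 0 _); apply: val_inj.
Qed.

Lemma Ef_sigma i k (x : 'rV[R]_n) : (0 < n)%N ->
  eval (Ef i k) (Ksigma x) = if k == n.-1 then eval (Ef i k) x else - eval (Ef i k) x.
Proof.
move=> hn.
have cs : cos (crd n.-1 (Ksigma x)) = - cos (crd n.-1 x) by rewrite cos_sigma // eqxx.
have ss : sin (crd n.-1 (Ksigma x)) = - sin (crd n.-1 x) by rewrite sin_sigma.
rewrite /Ef; case: ifP => h1.
  by case: ifP => _ /=; rewrite ?oppr0.
case: ifP => h2; last by case: ifP => _ /=; rewrite ?oppr0.
have hk : (k == n.-1) = false.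
  move/andP: h2 => [hi hik]; have := pair_lt hi hik.
  move=> hk; apply/negbTE; rewrite neq_ltn; apply/orP; left.
  exact: leq_trans hk sK_le.
rewrite hk; case: (odd i); case: (odd k) => /=; rewrite ?cs ?ss; ring.
Qed.

Definition Vf (i : nat) : 'rV[R]_n -> 'rV[R]_n := vmap n (Ef i).

Lemma Vf_field i : (0 < n)%N -> Kvector_field (Vf i).
Proof.
move=> hn; split; first exact: (@vmap_Ck R n n 0 (Ef i)).
split.
  by move=> j x; apply/rowP => k; rewrite !mxE eval_trans.
by move=> x; apply/rowP => k; rewrite !mxE Ef_sigma // /is_last.
Qed.

End Fields.


Section Free.
Variables (R : realType) (n : nat).

Lemma Vf_free (x : 'rV[R]_n) : (0 < n)%N ->
  row_free (\matrix_(i < sK n, j < n) @Vf R n (val i) x 0 j).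
Proof.
move=> hn; apply: inj_row_free => w hw.
have col : forall k, (k < n)%N -> \sum_(i < sK n) w 0 i * eval (@Ef R n i k) x = 0.
  move=> k hk; move/rowP: hw => /(_ (Ordinal hk)) h.
  rewrite !mxE in h; apply: etrans h.
  by apply: eq_bigr => i _; rewrite !mxE.
have hs0 := sK_gt0 hn.
have hsn := sK_le n.
set S := sin (crd n.-1 x); set C := cos (crd n.-1 x).
have hsc : C ^+ 2 + S ^+ 2 = 1 by rewrite cos2Dsin2.
have key : forall i, (i < sK n)%N -> crd i w = 0.
  move=> i hi; case: (eqVneq i (sK n).-1) => [ei|ni].
  - have hn1 : (n.-1 < n)%N by rewrite ltn_predL.
    have := col _ hn1; rewrite (@sum1 R _ w (fun i => eval (@Ef R n i n.-1) x) (sK n).-1).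
      by rewrite /Ef !eqxx /= mulr1 ei.
    move=> i' hi'; rewrite /Ef (negbTE hi').
    case: ifP => //= /andP[h1 h2]; have := pair_lt h1 h2 => h3.
    by have := leq_trans h3 hsn; rewrite ltnn.
  - have hi' : (i < (sK n).-1)%N.
      by rewrite ltn_neqAle ni /= -ltnS prednK.
    set q := i./2; set a := q.*2; set b := a.+1.
    have ha2 : a./2 = q by rewrite /a doubleK.
    have hb2 : b./2 = q by rewrite /b /a; change ((true + q.*2)./2 = q); exact: half_bit_double.
    have ha : (a < (sK n).-1)%N by apply: (pair_lt hi'); rewrite ha2.
    have hb : (b < (sK n).-1)%N by apply: (pair_lt hi'); rewrite hb2.
    have han : (a < n)%N by apply: leq_trans ha _; apply: leq_trans hsn _; exact: leq_pred.
    have hbn : (b < n)%N by apply: leq_trans hb _; apply: leq_trans hsn _; exact: leq_pred.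
    have hoa : odd a = false by rewrite /a odd_double.
    have hob : odd b = true by rewrite /b /= hoa.
    have zero : forall k, k./2 = q -> (k < (sK n).-1)%N ->
        forall i' : 'I_(sK n), val i' != a -> val i' != b -> eval (@Ef R n i' k) x = 0.
      move=> k hk hk' i'; rewrite -[val i']/(nat_of_ord i') => h1 h2; rewrite /Ef; case: ifP => h3.
        rewrite (_ : (k == n.-1) = false) //; apply/negbTE; rewrite neq_ltn.
        by rewrite (leq_trans hk' hsn).
      case: ifP => //= /andP [_ /eqP h4]; exfalso.
      have := odd_double_half i'; rewrite h4 hk -/a.
      by case: (odd i') => /= e; [move: h2; rewrite -e eqxx | move: h1; rewrite -e eqxx].
    have ca := col _ han; have cb := col _ hbn.
    rewrite (@sum2 R _ w (fun i => eval (@Ef R n i a) x) a b) in ca; last 2 first.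
      by rewrite /b neq_ltn ltnSn.
      exact: zero.
    rewrite (@sum2 R _ w (fun i => eval (@Ef R n i b) x) a b) in cb; last 2 first.
      by rewrite /b neq_ltn ltnSn.
      exact: zero.
    rewrite /Ef !(ltn_eqF ha) !(ltn_eqF hb) ha hb ha2 hb2 eqxx hoa hob /= -/S -/C in ca cb.
    have [wa wb] : crd a w = 0 /\ crd b w = 0.
      apply: (pair_inv hsc).
        by rewrite -ca; ring.
      by rewrite -cb; ring.
    have := odd_double_half i; rewrite -/q -/a.
    by case: (odd i) => /= <-; [rewrite add1n | rewrite add0n].
apply/rowP => j; rewrite mxE crd_ord; exact: key (ltn_ord j).
Qed.

End Free.


Section Upper.
Variables (R : realType) (n : nat).

Lemma cont_sum_seq (T : topologicalType) (I : Type) (F : I -> T -> R) (r : seq I) :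
  (forall i, continuous (F i)) -> continuous (fun x => \sum_(i <- r) F i x).
Proof.
move=> h; elim: r => [|a r IH].
  have -> : (fun y => \sum_(i <- [::]) F i y) = cst 0 by apply/funext => y; rewrite big_nil.
  exact: cst_continuous.
have -> : (fun y => \sum_(i <- a :: r) F i y) = F a + (fun y => \sum_(i <- r) F i y).
  by apply/funext => y; rewrite big_cons.
by move=> x; apply: continuousD; [exact: h | exact: IH].
Qed.

Lemma cont_prod_seq (T : topologicalType) (I : Type) (F : I -> T -> R) (r : seq I) :
  (forall i, continuous (F i)) -> continuous (fun x => \prod_(i <- r) F i x).
Proof.
move=> h; elim: r => [|a r IH].
  have -> : (fun y => \prod_(i <- [::]) F i y) = cst 1 by apply/funext => y; rewrite big_nil.
  exact: cst_continuous.
have -> : (fun y => \prod_(i <- a :: r) F i y) = F a \* (fun y => \prod_(i <- r) F i y).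
  by apply/funext => y; rewrite big_cons.
by move=> x; apply: continuousM; [exact: h | exact: IH].
Qed.

Lemma cont_sum (T : topologicalType) (I : finType) (F : I -> T -> R) :
  (forall i, continuous (F i)) -> continuous (fun x => \sum_i F i x).
Proof. exact: cont_sum_seq. Qed.

Lemma cont_prod (T : topologicalType) (I : finType) (F : I -> T -> R) :
  (forall i, continuous (F i)) -> continuous (fun x => \prod_i F i x).
Proof. exact: cont_prod_seq. Qed.

Lemma cont_scal (T : topologicalType) (c : R) (f : T -> R) :
  continuous f -> continuous (fun y => c * f y).
Proof.
move=> hf; have -> : (fun y => c * f y) = cst c \* f by [].
by move=> x; apply: continuousM; [exact: cst_continuous | exact: hf].
Qed.

Lemma cont_det (T : topologicalType) (M : T -> 'M[R]_n) :
  (forall i j, continuous (fun x => M x i j)) -> continuous (fun x => \det (M x)).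
Proof.
move=> h; rewrite /determinant.
apply: cont_sum => sg; apply: cont_scal.
by apply: cont_prod => i; exact: h.
Qed.

Lemma minmax0 (d : R) : d != 0 -> Num.min d (- d) <= 0 <= Num.max d (- d).
Proof.
move=> hd; rewrite /Num.min /Num.max; case: ifP => h; apply/andP; split; lra.
Qed.

Lemma prod_sign : (0 < n)%N -> ~~ odd n ->
  \prod_(j < n) (if @is_last n j then 1 else -1 : R) = -1.
Proof.
case: n => [|m] // _ hev; rewrite big_ord_recr /= /is_last /= eqxx mulr1.
rewrite (_ : \prod_(i < m) _ = \prod_(i < m) (-1 : R)); last first.
  by apply: eq_bigr => j _ /=; rewrite ltn_eqF.
by rewrite prodr_const card_ord -signr_odd; move: hev => /= /negbNE ->; rewrite expr1.
Qed.

Lemma no_n_fields : (0 < n)%N -> ~~ odd n -> ~ K_has_indep_fields R n n.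
Proof.
move=> hn hev [V [HV Hfree]].
set M := fun x => \matrix_(i < n, j < n) V i x 0 j.
have hdet : forall x, \det (M x) != 0.
  by move=> x; have := Hfree x; rewrite row_free_unit unitmxE unitfE.
have hcont : continuous (fun x => \det (M x)).
  apply: cont_det => i j.
  have -> : (fun x => M x i j) = (fun x => V i x 0 j) by apply/funext => x; rewrite mxE.
  have -> : (fun x => V i x 0 j) = (fun M0 : 'rV[R]_n => M0 0 j) \o V i by [].
  move=> x; apply: continuous_comp; first exact: (HV i).1.
  exact: coord_continuous.
set d : 'rV[R]_n := \row_j (if is_last j then 1 else -1).
have hsig : forall x, \det (M (Ksigma x)) = - \det (M x).
  move=> x.
  have -> : M (Ksigma x) = M x *m diag_mx d.
    apply/matrixP => i j; rewrite mul_mx_diag !mxE (HV i).2.2 !mxE.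
    by case: ifP => _; rewrite ?mulr1 ?mulrN1.
  rewrite det_mulmx det_diag.
  rewrite (eq_bigr (fun j => if is_last j then 1 else -1)); last by move=> j _; rewrite mxE.
  by rewrite prod_sign // mulrN1.
set y := Ksigma (0 : 'rV[R]_n).
set f := fun t : R => \det (M (t *: y)).
have fc : continuous f.
  have -> : f = (fun x => \det (M x)) \o (fun t : R => t *: y) by [].
  move=> t; apply: continuous_comp; last exact: hcont.
  by apply: continuousZr_tmp; exact: cvg_id.
have f0 : f 0 = \det (M 0) by rewrite /f scale0r.
have f1 : f 1 = - \det (M 0) by rewrite /f scale1r hsig.
have hm : Num.min (f 0) (f 1) <= 0 <= Num.max (f 0) (f 1).
  by rewrite f0 f1; exact: minmax0 (hdet 0).
have [c _ fc0] := @IVT R f 0 1 0 ler01 (continuous_subspaceT fc) hm.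
by move: (hdet (c *: y)); rewrite -/(f c) fc0 eqxx.
Qed.

End Upper.


Theorem mainTheorem10 (R : realType) (n : nat) : (1 <= n)%N ->
  K_span_is R n (if odd n then n else n.-1) /\ K_immerses_in R n n.+1.
Proof.
move=> hn; split.
- split.
  + exists (fun i : 'I_(sK n) => @Vf R n (val i)); split.
      by move=> i; apply: Vf_field.
    by move=> x; apply: Vf_free.
  + move=> k [V [HV Hfree]].
    have hk : (k <= n)%N.
      by have := Hfree (0 : 'rV[R]_n)%R; rewrite /row_free => /eqP <-; exact: rank_leq_col.
    case ho: (odd n) => //.
    rewrite leq_eqVlt in hk; case/orP: hk => [/eqP ek|hk].
      exfalso; subst k; apply: (@no_n_fields R n hn); first by rewrite ho.
      by exists V.
    by rewrite -ltnS prednK.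
- exists (@fK R n); split; first exact: vmap_smooth.
  split; first exact: fK_trans.
  split; first by move=> x; apply: fK_sigma.
  by move=> x v; apply: fK_imm.
Qed.
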